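(* Let $G$ be a group and $N\trianglelefteq G$ a solvable normal subgroup of derived length $d$ and finite exponent. (i) If $\exp(N)$ is odd, then $\exp(N\otimes G)$ divides $(\exp(N))^d$; in particular $\exp(M(G,N))$ divides $(\exp(N))^d$. (ii) If $\exp(N)$ is even, then $\exp(N\otimes G)$ divides $2^d(\exp(N))^d$; in particular $\exp(M(G,N))$ divides $2^d(\exp(N))^d$.
   Context: Conventions: ${}^g h = ghg^{-1}$, $[g,h]=ghg^{-1}h^{-1}$. $N\otimes G$ is generated by symbols $x\otimes g$ ($x\in N$, $g\in G$) subject to $xx'\otimes g=({}^x x'\otimes {}^x g)(x\otimes g)$ and $x\otimes gg'=(x\otimes g)({}^g x\otimes {}^g g')$; $N\wedge G$ is its quotient by the subgroup generated by all $x\otimes x$, $x\in N$. The relative Schur multiplier $M(G,N)$ is the kernel of the homomorphism $N\wedge G\to G$, $x\wedge g\mapsto [x,g]$. *)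

(* Defs.v *)
From HB Require Import structures.
From mathcomp Require Import all_boot monoid.

Set Implicit Arguments.
Unset Strict Implicit.
Unset Printing Implicit Defensive.

Local Open Scope group_scope.

Section Defs.
Variable G : groupType.

(* Paper's conventions: ^g h = g h g^-1 and [g,h] = g h g^-1 h^-1. *)
Definition lconj (g h : G) : G := g * h * g^-1.
Definition lcomm (g h : G) : G := g * h * g^-1 * h^-1.

Definition is_normal_subgroup (N : G -> Prop) : Prop :=
  [/\ N 1,
      (forall x y, N x -> N y -> N (x * y)),
      (forall x, N x -> N x^-1) &
      (forall g x, N x -> N (lconj g x))].

Inductive gen_subgroup (S : G -> Prop) : G -> Prop :=
| gs_one : gen_subgroup S 1
| gs_in x : S x -> gen_subgroup S x
| gs_mul x y : gen_subgroup S x -> gen_subgroup S y -> gen_subgroup S (x * y)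
| gs_inv x : gen_subgroup S x -> gen_subgroup S x^-1.

Definition comm_subgroup (H : G -> Prop) : G -> Prop :=
  gen_subgroup (fun z => exists a b, [/\ H a, H b & z = lcomm a b]).

Fixpoint derived (N : G -> Prop) (k : nat) : G -> Prop :=
  if k is k'.+1 then comm_subgroup (derived N k') else N.

Definition derived_length (N : G -> Prop) (d : nat) : Prop :=
  (forall x, derived N d x -> x = 1) /\
  (forall k, k < d -> exists x, derived N k x /\ x <> 1).

Definition exponent_is (N : G -> Prop) (e : nat) : Prop :=
  [/\ 0 < e,
      (forall x, N x -> x ^+ e = 1) &
      (forall k, 0 < k -> (forall x, N x -> x ^+ k = 1) -> e <= k)].

(* Words in the symbols x (x) g and their inverses: a letter (b, x, g)
   stands for (x (x) g) if b = false and (x (x) g)^-1 if b = true. *)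
Definition letter := (bool * G * G)%type.
Definition word := seq letter.
Definition flip (l : letter) : letter := (~~ l.1.1, l.1.2, l.2).
Definition sym (x g : G) : letter := (false, x, g).

Definition N_word (N : G -> Prop) (w : word) : Prop :=
  forall l, l \in w -> N l.1.2.

(* The defining congruence of N (x) G (wedge = false) and of N /\ G
   (wedge = true, additionally x (x) x = 1): the smallest congruence on
   words containing the free-group cancellations and the defining relations. *)
Inductive tens_eq (N : G -> Prop) (wedge : bool) : word -> word -> Prop :=
| te_refl w : tens_eq N wedge w w
| te_sym w1 w2 : tens_eq N wedge w1 w2 -> tens_eq N wedge w2 w1
| te_trans w1 w2 w3 :
    tens_eq N wedge w1 w2 -> tens_eq N wedge w2 w3 -> tens_eq N wedge w1 w3
| te_cat u u' v v' :
    tens_eq N wedge u u' -> tens_eq N wedge v v' ->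
    tens_eq N wedge (u ++ v) (u' ++ v')
| te_cancel l : tens_eq N wedge [:: l; flip l] [::]
| te_rel1 x x' g : N x -> N x' ->
    tens_eq N wedge [:: sym (x * x') g]
                    [:: sym (lconj x x') (lconj x g); sym x g]
| te_rel2 x g g' : N x ->
    tens_eq N wedge [:: sym x (g * g')]
                    [:: sym x g; sym (lconj g x) (lconj g g')]
| te_wedge x : wedge -> N x -> tens_eq N wedge [:: sym x x] [::].

Definition word_pow (w : word) (m : nat) : word := flatten (nseq m w).

Definition tensor_exp_dvd (N : G -> Prop) (m : nat) : Prop :=
  forall w, N_word N w -> tens_eq N false (word_pow w m) [::].

(* The commutator map N /\ G -> G, x /\ g |-> [x,g], on words. *)
Definition comm_eval (w : word) : G :=
  foldr (fun l acc => (if l.1.1 then (lcomm l.1.2 l.2)^-1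
                       else lcomm l.1.2 l.2) * acc) 1 w.

(* exp(M(G,N)) divides m, where M(G,N) = ker (N /\ G -> G). *)
Definition rel_schur_exp_dvd (N : G -> Prop) (m : nat) : Prop :=
  forall w, N_word N w -> comm_eval w = 1 ->
    tens_eq N true (word_pow w m) [::].

End Defs.

(* Main.v *)
Require Import Defs.
From HB Require Import structures.
From mathcomp Require Import all_boot monoid.
From mathcomp Require Import boolp.
Set Implicit Arguments.
Unset Strict Implicit.
Unset Printing Implicit Defensive.
Local Open Scope group_scope.

Ltac gsimpl := rewrite /lconj /lcomm ?invgM ?invgK -?mulgA;
  do ?(rewrite ?mulKg ?mulVKg ?mulgV ?mulVg ?mulg1 ?mul1g ?invg1 -?mulgA).

Section GId.
Variable G : groupType.
Implicit Types a b x y g h k : G.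

Lemma lconjM g h x : lconj (g * h) x = lconj g (lconj h x).
Proof. by rewrite /lconj invgM !mulgA. Qed.
Lemma lconj_mul g x y : lconj g (x * y) = lconj g x * lconj g y.
Proof. by rewrite /lconj !mulgA mulgVK. Qed.
Lemma lconj1g x : lconj 1 x = x.
Proof. by rewrite /lconj invg1 mul1g mulg1. Qed.
Lemma lconjg1 g : lconj g 1 = 1.
Proof. by rewrite /lconj mulg1 mulgV. Qed.
Lemma lconjV g x : lconj g x^-1 = (lconj g x)^-1.
Proof. by rewrite /lconj !invgM invgK !mulgA. Qed.
Lemma lconjK g x : lconj g^-1 (lconj g x) = x.
Proof. by rewrite -lconjM mulVg lconj1g. Qed.
Lemma lconjKV g x : lconj g (lconj g^-1 x) = x.
Proof. by rewrite -lconjM mulgV lconj1g. Qed.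
Lemma lconj_self g : lconj g g = g.
Proof. by rewrite /lconj mulgK. Qed.
Lemma lconjJ a b y : lconj (lconj a b) (lconj a y) = lconj (a * b) y.
Proof. by rewrite -!lconjM {2}/lconj mulgVK. Qed.
Lemma lcommE x g : lcomm x g = x * g * (g * x)^-1.
Proof. by rewrite /lcomm invgM !mulgA. Qed.

Lemma lcommMl a b g : lcomm (a * b) g = lconj a (lcomm b g) * lcomm a g.
Proof. by gsimpl. Qed.
Lemma lcommMr x b (b' : G) : lcomm x (b * b') = lcomm x b * lconj b (lcomm x b').
Proof. by gsimpl. Qed.
Lemma lcomm1g g : lcomm 1 g = 1.
Proof. by gsimpl. Qed.
Lemma lcommg1 g : lcomm g 1 = 1.
Proof. by gsimpl. Qed.
Lemma lconj_comm a y : commute a y -> lconj a y = y.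
Proof. by move=> c; rewrite /lconj c mulgK. Qed.
Lemma lconjX a n : lconj a (a ^+ n) = a ^+ n.
Proof. by apply: lconj_comm; apply: commuteX. Qed.
End GId.

Section Abstract.
Variables (G H : groupType) (N : G -> Prop) (t : G -> G -> H).
Hypothesis nN : is_normal_subgroup N.
Hypothesis R1 : forall x x' g, N x -> N x' ->
  t (x * x') g = t (lconj x x') (lconj x g) * t x g.
Hypothesis R2 : forall x g g', N x ->
  t x (g * g') = t x g * t (lconj g x) (lconj g g').

Lemma N1 : N 1. Proof. by case: nN. Qed.
Lemma NM x y : N x -> N y -> N (x * y). Proof. by case: nN => _ h _ _; apply: h. Qed.
Lemma NV x : N x -> N x^-1. Proof. by case: nN => _ _ h _; apply: h. Qed.
Lemma NJ g x : N x -> N (lconj g x). Proof. by case: nN => _ _ _ h; apply: h. Qed.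

Lemma selfid (u : H) : u = u * u -> u = 1.
Proof. by move=> e; apply: (@mulgI _ u); rewrite mulg1 -e. Qed.

Lemma t1g g : t 1 g = 1.
Proof. by apply: selfid; have := R1 g N1 N1; rewrite mulg1 !lconj1g. Qed.

Lemma tx1 x : N x -> t x 1 = 1.
Proof. by move=> Nx; apply: selfid; have := R2 1 1 Nx; rewrite mulg1 !lconj1g. Qed.

Lemma L3pre x x' g g' : N x -> N x' ->
  t (lconj (x * g) x') (lconj (x * g) g') * t x g =
  t x g * t (lconj (g * x) x') (lconj (g * x) g').
Proof.
move=> Nx Nx'.
have Nxx' : N (lconj x x') by apply: NJ.
have Ngx : N (lconj g x) by apply: NJ.
have Ngx' : N (lconj g x') by apply: NJ.
have E1 := R1 (g * g') Nx Nx'.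
have E2 := R2 (lconj x g) (lconj x g') Nxx'.
have E3 := R2 g g' Nx.
have E4 := R2 g g' (NM Nx Nx').
have E5 := R1 g Nx Nx'.
have E6 := R1 (lconj g g') Ngx Ngx'.
rewrite lconj_mul E2 E3 in E1.
rewrite E4 E5 lconj_mul E6 !lconjJ in E1.
move: E1; rewrite !mulgA => /mulIg; rewrite -!mulgA => /mulgI.
by move=> ->.
Qed.

Lemma L3 x g y h : N x -> N y ->
  t x g * t y h = t (lconj (lcomm x g) y) (lconj (lcomm x g) h) * t x g.
Proof.
move=> Nx Ny.
have := L3pre g (lconj (g * x)^-1 h) Nx (NJ (g * x)^-1 Ny).
rewrite !lconjKV -!lconjM -lcommE => ->.
by [].
Qed.


Lemma Dinv1 x g : N x -> t x^-1 (lconj x g) = (t x g)^-1.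
Proof.
move=> Nx; have := R1 g Nx (NV Nx).
rewrite mulgV t1g lconjV lconj_self => /esym/mulg1_eq <-.
by rewrite ?invgK.
Qed.

Lemma Dinv2 x k : N x -> t (lconj k x) k^-1 = (t x k)^-1.
Proof.
move=> Nx; have := R2 k k^-1 Nx.
rewrite mulgV tx1 // lconjV lconj_self => /esym/mulg1_eq <-.
by rewrite ?invgK.
Qed.

Lemma I1 x k h : N x ->
  t (lcomm x k) h = t x k * (t (lconj h x) (lconj h k))^-1.
Proof.
move=> Nx.
set c := lcomm x k.
have Nkx : N (lconj k x) by apply: NJ.
have Nkxi : N (lconj k x^-1) by rewrite lconjV; apply: NV.
have ec : c = x * lconj k x^-1 by rewrite /c /lcomm /lconj !mulgA.
set x'' := lconj (x * k) x.
have Nx'' : N x'' by apply: NJ.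
have e1 : lconj x (lconj k x^-1) = x''^-1.
  by rewrite /x'' -lconjV lconjM.
have e2 : x'' * c = x.
  by rewrite /x'' /c; gsimpl.
have e3 : lconj x h = lconj x'' (lconj c h) by rewrite -lconjM e2.
have e4 : x'' = lconj c (lconj k x).
  by rewrite -lconjM /x'' /c; gsimpl.
have E := R1 h Nx Nkxi.
rewrite -ec e1 e3 Dinv1 // e4 in E.
have L := L3 k h Nx Nkx.
have E' : t (lconj c (lconj k x)) (lconj c h) = t x k * t (lconj k x) h * (t x k)^-1.
  by rewrite L mulgK.
rewrite E' !invgM invgK !mulgA in E.
rewrite E.
have E4' := R2 k (k^-1 * h) Nx.
rewrite mulVKg in E4'.
have e5 : lconj k (k^-1 * h) = h * k^-1 by gsimpl.
rewrite e5 in E4'.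
rewrite -!mulgA; congr (_ * _); rewrite E4' mulKg.
have E5 := R2 h k^-1 Nkx.
rewrite E5 mulKg.
have := Dinv2 (lconj h k) (NJ h Nx).
by rewrite lconjJ lconjM -lconjV.
Qed.

Inductive gen (P : H -> Prop) : H -> Prop :=
| gen1 : gen P 1
| genM s u : P s -> gen P u -> gen P (s * u)
| genV s u : P s -> gen P u -> gen P (s^-1 * u).

Lemma gen_sub (P Q : H -> Prop) u : (forall s, P s -> Q s) -> gen P u -> gen Q u.
Proof.
move=> PQ; elim=> [|s v Ps _ IH|s v Ps _ IH]; first exact: gen1.
  by apply: genM; [apply: PQ|].
by apply: genV; [apply: PQ|].
Qed.

Lemma gen_mul P u v : gen P u -> gen P v -> gen P (u * v).
Proof.
elim=> [|s w Ps _ IH|s w Ps _ IH] gv; first by rewrite mul1g.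
  by rewrite -mulgA; apply: genM => //; apply: IH.
by rewrite -mulgA; apply: genV => //; apply: IH.
Qed.

Lemma gen_inv P u : gen P u -> gen P u^-1.
Proof.
elim=> [|s w Ps _ IH|s w Ps _ IH]; first by rewrite invg1; apply: gen1.
  rewrite invgM; apply: gen_mul => //; rewrite -[_^-1]mulg1; apply: genV => //; exact: gen1.
rewrite invgM invgK; apply: gen_mul => //; rewrite -[s]mulg1; apply: genM => //; exact: gen1.
Qed.

Lemma gen_in P s : P s -> gen P s.
Proof. by move=> Ps; rewrite -[s]mulg1; apply: genM => //; apply: gen1. Qed.

Lemma gen_X P u n : gen P u -> gen P (u ^+ n).
Proof.
move=> gu; elim: n => [|n IH]; first exact: gen1.
by rewrite expgS; apply: gen_mul.
Qed.

Definition Tgen (s : H) := exists y h, N y /\ s = t y h.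

Definition Zc (z : H) := forall y h, N y -> commute z (t y h).

Lemma Zc_gen z u : Zc z -> gen Tgen u -> commute z u.
Proof.
move=> Zz; elim=> [|s w [y [h [Ny ->]]] _ IH|s w [y [h [Ny ->]]] _ IH].
- exact: commute1.
- by apply: commuteM => //; apply: Zz.
- by apply: commuteM => //; apply: commuteV; apply: Zz.
Qed.

Lemma Zc1 : Zc 1.
Proof. by move=> y h _; apply: commute_sym; apply: commute1. Qed.

Lemma ZcM z z' : Zc z -> Zc z' -> Zc (z * z').
Proof.
move=> Zz Zz' y h Ny; apply: commute_sym; apply: commuteM; apply: commute_sym.
  exact: Zz. exact: Zz'.
Qed.

Lemma ZcV z : Zc z -> Zc z^-1.
Proof. by move=> Zz y h Ny; apply: commute_sym; apply: commuteV; apply: commute_sym; apply: Zz. Qed.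

Lemma ZcX z n : Zc z -> Zc (z ^+ n).
Proof.
move=> Zz; elim: n => [|n IH]; first exact: Zc1.
by rewrite expgS; apply: ZcM.
Qed.

Section Kill.
Variables (A B : G -> Prop).
Hypothesis nA : is_normal_subgroup A.
Hypothesis nB : is_normal_subgroup B.
Hypothesis AN : forall x, A x -> N x.
Hypothesis BN : forall x, B x -> N x.
Hypothesis AAB : forall a b, A a -> A b -> B (lcomm a b).
Hypothesis kill : forall x g, N x -> B x \/ B g -> t x g = 1.

Lemma kill1 c y h : B c -> N y -> t (lconj c y) (lconj c h) = t y h.
Proof.
move=> Bc Ny; have Nc := BN Bc.
have E1 := R1 h Nc Ny.
rewrite (kill (g:=h) Nc (or_introl Bc)) mulg1 in E1.
have Nyc : N (lconj y^-1 c) by apply: NJ.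
have E2 := R1 h Ny Nyc.
rewrite lconjKV (kill (g:=lconj y h) Nc (or_introl Bc)) mul1g in E2.
by rewrite -E1 -E2; congr (t _ h); gsimpl.
Qed.

Lemma I1' y h k : N y -> B (lcomm y h) -> t (lconj k y) (lconj k h) = t y h.
Proof.
move=> Ny Bc; have := I1 h k Ny.
rewrite kill; [|exact: BN|by left].
by move/esym/mulg1_eq/invg_inj => ->.
Qed.

Lemma Zc_letter y h : N y -> B (lcomm y h) -> Zc (t y h).
Proof.
move=> Ny Bc y' h' Ny'; rewrite /commute L3 //.
by rewrite kill1.
Qed.

End Kill.

Section Power.
Variables (A B : G -> Prop).
Hypothesis nA : is_normal_subgroup A.
Hypothesis nB : is_normal_subgroup B.
Hypothesis AN : forall x, A x -> N x.
Hypothesis BN : forall x, B x -> N x.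
Hypothesis AAB : forall a b, A a -> A b -> B (lcomm a b).
Hypothesis kill : forall x g, N x -> B x \/ B g -> t x g = 1.
Variable e : nat.
Hypothesis expA : forall a, A a -> a ^+ e = 1.

Lemma A_lcomm x g : A x \/ A g -> A (lcomm x g).
Proof.
case: nA => A1 AM AV AJ [Ax|Ag].
  have -> : lcomm x g = x * lconj g x^-1 by gsimpl.
  by apply: AM => //; apply: AJ; apply: AV.
have -> : lcomm x g = lconj x g * g^-1 by gsimpl.
by apply: AM; [apply: AJ|apply: AV].
Qed.

Lemma AJ' g x : A x -> A (lconj g x). Proof. by case: nA => _ _ _; apply. Qed.
Lemma AX a n : A a -> A (a ^+ n).
Proof.
case: nA => A1 AM _ _ Aa; elim: n => [|n IH] //.
by rewrite expgS; apply: AM.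
Qed.

Definition Kgen (s : H) := exists x g, N x /\ (A x \/ A g) /\ s = t x g.

Lemma gK_T u : gen Kgen u -> gen Tgen u.
Proof. by apply: gen_sub => s [x [g [Nx [_ ->]]]]; exists x, g. Qed.

Definition Cm u v := exists z, Zc z /\ u * v = v * u * z.

Lemma C_base s1 s2 : Kgen s1 -> Kgen s2 -> Cm s1 s2.
Proof.
move=> [x1 [g1 [N1 [A1 ->]]]] [x2 [g2 [N2 [A2 ->]]]].
set c2 := lcomm x2 g2.
have L := L3 g2 g1 N2 N1.
have I := I1 g1 c2 N1.
set q := t (lcomm x1 g1) c2 in I.
have Zq : Zc q.
  apply: (Zc_letter (B:=B)) => //.
  - exact: AN (A_lcomm A1).
  - exact: AAB (A_lcomm A1) (A_lcomm A2).
have eX : t (lconj c2 x1) (lconj c2 g1) = q^-1 * t x1 g1.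
  by rewrite I invgM invgK mulgVK.
rewrite -/c2 eX in L.
exists q; split => //.
have cq : commute q (t x1 g1 * t x2 g2).
  apply: (Zc_gen Zq); apply: gen_mul; apply: gen_in; [exists x1, g1|exists x2, g2]; by [].
by rewrite L -(mulgA q^-1) -mulgA -cq mulKg.
Qed.

Lemma C_1l v : Cm 1 v.
Proof. by exists 1; split; [exact: Zc1|rewrite mul1g !mulg1]. Qed.

Lemma C_1r v : Cm v 1.
Proof. by exists 1; split; [exact: Zc1|rewrite mul1g !mulg1]. Qed.

Lemma C_sym u v : Cm u v -> Cm v u.
Proof.
move=> [z [Zz E]]; exists z^-1; split; first exact: ZcV.
by rewrite E mulgK.
Qed.

Lemma C_mull u1 u2 v : Cm u1 v -> Cm u2 v -> gen Tgen u2 -> Cm (u1 * u2) v.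
Proof.
move=> [z1 [Z1 E1]] [z2 [Z2 E2]] g2; exists (z1 * z2); split; first exact: ZcM.
rewrite -mulgA E2 !mulgA E1.
have c := Zc_gen Z1 g2.
by rewrite -!mulgA; congr (_ * (_ * _)); rewrite !mulgA c.
Qed.

Lemma C_invl u v : Cm u v -> gen Tgen u -> Cm u^-1 v.
Proof.
move=> [z [Zz E]] gu; exists z^-1; split; first exact: ZcV.
have cV : commute z u^-1 by apply: commuteV; apply: Zc_gen.
apply: (@mulgI _ u); rewrite mulVKg !mulgA E.
by rewrite -(mulgA (v * u) z u^-1) cV mulgA !mulgK.
Qed.

Lemma C_gen_l u s : gen Kgen u -> Kgen s -> Cm u s.
Proof.
move=> gu Ks; elim: gu => [|s1 w K1 gw IH|s1 w K1 gw IH].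
- exact: C_1l.
- by apply: C_mull => //; [apply: C_base|apply: gK_T].
- apply: C_mull => //; last exact: gK_T.
  by apply: C_invl; [apply: C_base|apply: gK_T; apply: gen_in].
Qed.

Lemma C_gen u v : gen Kgen u -> gen Kgen v -> Cm u v.
Proof.
move=> gu gv; elim: gv => [|s w K1 gw IH|s w K1 gw IH].
- exact: C_1r.
- apply: C_sym; apply: C_mull; [|apply: C_sym => //|apply: gK_T => //].
  exact: C_sym (C_gen_l gu K1).
- apply: C_sym; apply: C_mull; [|apply: C_sym => //|apply: gK_T => //].
  apply: C_invl; first exact: C_sym (C_gen_l gu K1).
  by apply: gK_T; apply: gen_in.
Qed.

Lemma pow_comm_l v s z n : Zc z -> gen Tgen v -> v * s = s * v * z ->
  v ^+ n * s = s * v ^+ n * z ^+ n.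
Proof.
move=> Zz gv E; elim: n => [|n IH]; first by rewrite mul1g !mulg1.
have c : commute z (v ^+ n) by apply: Zc_gen => //; apply: gen_X.
rewrite !expgS -mulgA IH !mulgA E.
by rewrite -(mulgA (s * v) z) c !mulgA.
Qed.

Lemma pow_comm_r v s z n : Zc z -> gen Tgen s -> v * s = s * v * z ->
  v * s ^+ n = s ^+ n * v * z ^+ n.
Proof.
move=> Zz gs E; elim: n => [|n IH]; first by rewrite mul1g !mulg1.
have c : commute z s by apply: Zc_gen.
rewrite !expgSr mulgA IH -(mulgA _ (z ^+ n)).
have c' : commute (z ^+ n) s by apply: commute_sym; apply: commuteX; apply: commute_sym.
rewrite c' mulgA -(mulgA _ v s) E !mulgA -!mulgA. do 3 congr (_ * _). exact: commuteX.
Qed.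

Lemma powMC s v z n : Zc z -> gen Tgen s -> gen Tgen v -> v * s = s * v * z ->
  (s * v) ^+ n = s ^+ n * v ^+ n * z ^+ 'C(n, 2).
Proof.
move=> Zz gs gv E; elim: n => [|n IH]; first by rewrite !mulg1.
rewrite expgSr IH binS bin1 expgnDr.
have cs : commute (z ^+ 'C(n, 2)) s by apply: Zc_gen; [apply: ZcX|].
have cv : commute (z ^+ n * z ^+ 'C(n, 2)) v.
  by apply: Zc_gen => //; apply: ZcM; apply: ZcX.
rewrite mulgA -(mulgA _ (z ^+ 'C(n, 2)) s) cs !mulgA.
rewrite -(mulgA (s ^+ n)) (pow_comm_l n Zz gv E) !mulgA.
rewrite -(mulgA _ (z ^+ n) (z ^+ 'C(n, 2))) -(mulgA _ (z ^+ n * z ^+ 'C(n, 2)) v) cv.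
by rewrite !mulgA -!expgSr -!mulgA (mulgA (v ^+ n)) -expgSr -!expgnDr addnC.
Qed.

Variable c : nat.
Definition Good (s : H) := s ^+ c = 1 /\ Zc (s ^+ 'C(c, 2)).

Lemma GoodV s : Good s -> Good s^-1.
Proof.
move=> [h1 h2]; split; first by rewrite expVgn h1 invg1.
by rewrite expVgn; apply: ZcV.
Qed.

Lemma step_pow s w : Good s -> gen Kgen s -> gen Kgen w -> w ^+ c = 1 ->
  (s * w) ^+ c = 1.
Proof.
move=> [Gs1 Gs2] gs gw wc.
have [z [Zz E]] := C_gen gw gs.
rewrite (powMC c Zz (gK_T gs) (gK_T gw) E) Gs1 wc !mul1g.
have := pow_comm_r 'C(c, 2) Zz (gK_T gs) E.
have -> : w * s ^+ 'C(c, 2) = s ^+ 'C(c, 2) * w.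
  by apply: commute_sym; apply: Zc_gen => //; apply: gK_T.
by rewrite -{1}[s ^+ _ * w]mulg1 => /mulgI ->.
Qed.

Lemma main_pow u : (forall s, Kgen s -> Good s) -> gen Kgen u -> u ^+ c = 1.
Proof.
move=> HG; elim=> [|s w Ks gw IH|s w Ks gw IH]; first exact: expg1n.
  by apply: step_pow => //; [apply: HG|apply: gen_in].
apply: step_pow => //; first by apply: GoodV; apply: HG.
by apply: gen_inv; apply: gen_in.
Qed.

Hypothesis hc : c = if odd e then e else (e * 2)%N.

Lemma Good_from s z : Zc z -> s ^+ e = z ^+ 'C(e, 2) -> z ^+ e = 1 -> Good s.
Proof.
move=> Zz se ze; rewrite /Good hc; case: ifP => oe.
  have h : 'C(e, 2) = (e * e.-1./2)%N by rewrite bin2odd.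
  rewrite h expgnA se h expgnA ze !expg1n; split=> //; exact: Zc1.
have e2 : ('C(e, 2) * 2 = e * e.-1)%N.
  rewrite bin2 muln2 -[in RHS](odd_double_half (e * e.-1)) oddM oe /=.
  by rewrite add0n.
split.
  by rewrite expgnA se -expgnA e2 expgnA ze expg1n.
have -> : 'C(e * 2, 2) = (e * (e * 2).-1)%N.
  have h2 : forall m, ((m * 2)./2 = m)%N by move=> m; rewrite muln2 doubleK.
  by rewrite bin2 mulnAC h2.
rewrite expgnA se -expgnA; exact: ZcX.
Qed.

Lemma NX a n : N a -> N (a ^+ n).
Proof. move=> Na; elim: n => [|n IH]; [exact: N1|rewrite expgS; exact: NM]. Qed.

Lemma goodA a g : A a -> Good (t a g).
Proof.
move=> Aa; have Na := AN Aa.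
set s := t a g; set z := t (lcomm a g) a.
have Acg : A (lcomm a g) by apply: A_lcomm; left.
have Zz : Zc z.
  apply: (Zc_letter (B:=B)) => //; first exact: AN.
  exact: AAB.
have zn : forall n, t (lcomm (a ^+ n) g) a = z ^+ n.
  elim=> [|n IH]; first by rewrite lcomm1g t1g.
  have Ab : A (lcomm (a ^+ n) g) by apply: A_lcomm; left; apply: AX.
  rewrite expgS lcommMl R1; [|exact: NJ (AN Ab)|exact: AN].
  rewrite (I1' (B:=B)) //; [|exact: AN Acg|exact: AAB Acg Aa].
  have := I1' (B:=B) BN kill a (AN Ab) (AAB Ab Aa).
  by rewrite lconj_self => ->; rewrite IH expgS.
have Q : forall n, t (a ^+ n) g * z ^+ 'C(n, 2) = s ^+ n.
  elim=> [|n IH]; first by rewrite t1g mulg1.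
  rewrite expgS R1 //; last exact: NX.
  rewrite lconjX.
  have I := I1 g a (NX n Na).
  rewrite lconjX zn in I.
  have eX : t (a ^+ n) (lconj a g) = (z ^+ n)^-1 * t (a ^+ n) g.
    by rewrite I invgM invgK mulgVK.
  rewrite eX binS bin1 expgnDr.
  have cT : commute (z ^+ n) (t (a ^+ n) g) by apply: ZcX => //; exact: NX.
  have cs : commute (z ^+ n) s by apply: ZcX.
  have cs' : commute (z ^+ 'C(n, 2)) s by apply: ZcX.
  rewrite -(commuteX2 _ _ (commute_refl z)) !mulgA -(mulgA _ s) -cs mulgA.
  by rewrite -(mulgA _ (t (a ^+ n) g)) -cT mulKg -mulgA -cs' mulgA IH -expgSr.

apply: (Good_from Zz).
  by have := Q e; rewrite expA // t1g mul1g.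
by rewrite -zn expA // lcomm1g t1g.
Qed.

Lemma goodB x b : N x -> A b -> Good (t x b).
Proof.
move=> Nx Ab; have Nb := AN Ab.
set s := t x b; set w := t (lcomm x b) b.
have Axb : A (lcomm x b) by apply: A_lcomm; right.
have Zw : Zc w.
  apply: (Zc_letter (B:=B)) => //; first exact: AN.
  exact: AAB.
have wn : forall n, t (lcomm x (b ^+ n)) b = w ^+ n.
  elim=> [|n IH]; first by rewrite lcommg1 t1g.
  have Ac : A (lcomm x (b ^+ n)) by apply: A_lcomm; right; apply: AX.
  rewrite expgS lcommMr R1; [|exact: AN|exact: NJ (AN Ac)].
  rewrite (I1' (B:=B)) //; [|exact: NJ (AN Ac)|exact: AAB (AJ' _ Ac) Ab].
  have := I1' (B:=B) BN kill b (AN Ac) (AAB Ac Ab).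
  by rewrite lconj_self => ->; rewrite IH expgSr.
have Q : forall n, t x (b ^+ n) * w ^+ 'C(n, 2) = s ^+ n.
  elim=> [|n IH]; first by rewrite tx1 // mulg1.
  rewrite expgS R2 // lconjX.
  have I := I1 (b ^+ n) b Nx.
  rewrite lconjX wn in I.
  have eX : t (lconj b x) (b ^+ n) = (w ^+ n)^-1 * t x (b ^+ n).
    by rewrite I invgM invgK mulgVK.
  rewrite eX binS bin1 expgnDr.
  have cT : commute (w ^+ n) (t x (b ^+ n)) by apply: ZcX.
  have cw : commute (w ^+ 'C(n, 2)) (w ^+ n) by apply: commuteX2; apply: commute_refl.
  by rewrite cw !mulgA -(mulgA _ (t x (b ^+ n))) -cT mulgA mulgVK -mulgA IH -expgS.
apply: (Good_from Zw).
  by have := Q e; rewrite expA // tx1 // mul1g.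
by rewrite -wn expA // lcommg1 t1g.
Qed.

Lemma Kgen_good s : Kgen s -> Good s.
Proof.
move=> [x [g [Nx [[Ax|Ag] ->]]]]; [exact: goodA|exact: goodB].
Qed.

Lemma K_exp u : gen Kgen u -> u ^+ c = 1.
Proof. by apply: main_pow; apply: Kgen_good. Qed.

End Power.

End Abstract.

Section Quot.
Variable T : Type.
Variable cat : T -> T -> T.
Variable e : T.
Variable iv : T -> T.

Record cong := Cong {
  crel :> T -> T -> Prop;
  c_refl : forall u, crel u u;
  c_sym : forall u v, crel u v -> crel v u;
  c_trans : forall u v w, crel u v -> crel v w -> crel u w;
  c_cat : forall u u' v v', crel u u' -> crel v v' -> crel (cat u v) (cat u' v');
  c_assoc : forall u v w, crel (cat u (cat v w)) (cat (cat u v) w);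
  c_idl : forall u, crel (cat e u) u;
  c_idr : forall u, crel (cat u e) u;
  c_invl : forall u, crel (cat (iv u) u) e;
  c_invr : forall u, crel (cat u (iv u)) e
}.

Definition Q (R : cong) := {P : T -> Prop | exists w, P = R w}.
End Quot.

HB.instance Definition _ (T : Type) (c : T -> T -> T) (e : T) (i : T -> T) (R : cong c e i) := gen_eqMixin (Q R).
HB.instance Definition _ (T : Type) (c : T -> T -> T) (e : T) (i : T -> T) (R : cong c e i) := gen_choiceMixin (Q R).

Section QuotOps.
Variables (T : Type) (cat : T -> T -> T) (e : T) (iv : T -> T) (R : cong cat e iv).

Definition pi (w : T) : Q R := exist _ (R w) (ex_intro _ w erefl).
Definition repr (q : Q R) : T := projT1 (cid (proj2_sig q)).

Lemma reprK q : pi (repr q) = q.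
Proof.
rewrite /pi /repr; case: q => P pf /=.
case: (cid pf) => w /= ew; subst P.
by congr exist; apply: Prop_irrelevance.
Qed.

Lemma pi_eq u v : pi u = pi v <-> R u v.
Proof.
split.
  move=> /(congr1 (@proj1_sig _ _)) /= E.
  have h : R u u by apply: c_refl.
  by rewrite E in h; apply: (c_sym h).
move=> Ruv; rewrite /pi; move: (ex_intro _ u _) (ex_intro _ v _).
have -> : R u = R v.
  apply: funext => w; apply: propext; split => H.
    by apply: c_trans (c_sym Ruv) H.
  by apply: c_trans Ruv H.
by move=> p1 p2; congr exist; apply: Prop_irrelevance.
Qed.

Lemma repr_rel u : R (repr (pi u)) u.
Proof. by apply/pi_eq; rewrite reprK. Qed.

Definition qmul (p q : Q R) : Q R := pi (cat (repr p) (repr q)).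
Definition qone : Q R := pi e.
Definition qinv (q : Q R) : Q R := pi (iv (repr q)).

Lemma qmulE u v : qmul (pi u) (pi v) = pi (cat u v).
Proof. by apply/pi_eq; apply: c_cat; apply: repr_rel. Qed.


Lemma qinvE u : qinv (pi u) = pi (iv u).
Proof.
apply/pi_eq; rewrite /qinv.
apply: c_trans (c_sym (c_idl _ _)) _.
apply: c_trans (c_cat (c_sym (c_invl R u)) (c_refl _ _)) _.
apply: c_trans (c_sym (c_assoc _ _ _ _)) _.
apply: c_trans (c_cat (c_refl _ _) (c_cat (c_sym (repr_rel u)) (c_refl _ _))) _.
apply: c_trans (c_cat (c_refl _ _) (c_invr _ _)) _.
by apply: c_idr.
Qed.

Lemma piP (q : Q R) : exists w, q = pi w.
Proof. by exists (repr q); rewrite reprK. Qed.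

Lemma qmulA : associative qmul.
Proof.
move=> p q r; case: (piP p) => u ->; case: (piP q) => v ->; case: (piP r) => w ->.
by rewrite !qmulE; apply/pi_eq; apply: c_assoc.
Qed.
Lemma qmul1 : left_id qone qmul.
Proof. by move=> p; case: (piP p) => u ->; rewrite qmulE; apply/pi_eq; apply: c_idl. Qed.
Lemma qmulr1 : right_id qone qmul.
Proof. by move=> p; case: (piP p) => u ->; rewrite qmulE; apply/pi_eq; apply: c_idr. Qed.
Lemma qmulV : left_inverse qone qinv qmul.
Proof. by move=> p; case: (piP p) => u ->; rewrite qinvE qmulE; apply/pi_eq; apply: c_invl. Qed.
Lemma qmulrV : right_inverse qone qinv qmul.
Proof. by move=> p; case: (piP p) => u ->; rewrite qinvE qmulE; apply/pi_eq; apply: c_invr. Qed.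
End QuotOps.

HB.instance Definition _ (T : Type) (c : T -> T -> T) (e : T) (i : T -> T) (R : cong c e i) :=
  isGroup.Build (Q R) (@qmulA T c e i R) (@qmul1 T c e i R) (@qmulr1 T c e i R)
    (@qmulV T c e i R) (@qmulrV T c e i R).


Section Words.
Variables (G : groupType) (N : G -> Prop).
Hypothesis nN : is_normal_subgroup N.

Local Notation te := (tens_eq N false).
Local Notation word := (word G).
Local Notation letter := (letter G).

Definition winv (w : word) : word := rev (map (@flip G) w).

Lemma flipK : involutive (@flip G).
Proof. by case=> [[b x] g]; rewrite /flip /= negbK. Qed.

Lemma winvK : involutive winv.
Proof. by move=> w; rewrite /winv map_rev revK -map_comp map_id_in // => l _; apply: flipK. Qed.

Lemma winv_cons l w : winv (l :: w) = winv w ++ [:: flip l].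
Proof. by rewrite /winv /= rev_cons cats1. Qed.

Lemma winv_cat u v : winv (u ++ v) = winv v ++ winv u.
Proof. by rewrite /winv map_cat rev_cat. Qed.

Lemma te_catl wb w u v : tens_eq N wb u v -> tens_eq N wb (w ++ u) (w ++ v).
Proof. by move=> h; apply: te_cat => //; apply: te_refl. Qed.

Lemma te_catr wb w u v : tens_eq N wb u v -> tens_eq N wb (u ++ w) (v ++ w).
Proof. by move=> h; apply: te_cat => //; apply: te_refl. Qed.

Lemma te_winv wb w : tens_eq N wb (w ++ winv w) [::].
Proof.
elim: w => [|l w IH] /=; first exact: te_refl.
rewrite winv_cons catA.
apply: te_trans (te_cancel _ _ l).
have -> : [:: l, flip l & [::]] = [:: l] ++ ([::] ++ [:: flip l]) by [].
rewrite -cat_cons -[l :: _]cat1s -catA.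
by apply: te_catl; apply: te_catr.
Qed.

Lemma te_winvl wb w : tens_eq N wb (winv w ++ w) [::].
Proof. by have := te_winv wb (winv w); rewrite winvK. Qed.

Definition pN (l : letter) : bool := `[< N l.1.2 >].
Definition proj (w : word) : word := filter pN w.

Lemma proj_cat u v : proj (u ++ v) = proj u ++ proj v.
Proof. exact: filter_cat. Qed.

Lemma proj_winv w : proj (winv w) = winv (proj w).
Proof.
by rewrite /proj /winv filter_rev filter_map.
Qed.

Definition Sw (S : G -> G -> Prop) (s : word) := forall l, l \in s -> S l.1.2 l.2.
Definition NW := Sw (fun x _ => N x).

Lemma Sw_nil S : Sw S [::]. Proof. by []. Qed.
Lemma Sw_cat S u v : Sw S u -> Sw S v -> Sw S (u ++ v).
Proof. by move=> hu hv l; rewrite mem_cat => /orP [/hu|/hv]. Qed.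
Lemma Sw_cons S l s : S l.1.2 l.2 -> Sw S s -> Sw S (l :: s).
Proof. by move=> hl hs l'; rewrite in_cons => /orP [/eqP ->|/hs]. Qed.
Lemma Sw_consE S l s : Sw S (l :: s) -> S l.1.2 l.2 /\ Sw S s.
Proof.
by move=> h; split; [apply: h; rewrite mem_head|move=> l' hl'; apply: h; rewrite in_cons hl' orbT].
Qed.
Lemma Sw_winv S s : Sw S s -> Sw S (winv s).
Proof. by move=> h l; rewrite /winv mem_rev => /mapP [l' /h hl' ->]. Qed.
Lemma Sw_catE S u v : Sw S (u ++ v) -> Sw S u /\ Sw S v.
Proof. by move=> h; split=> l hl; apply: h; rewrite mem_cat hl ?orbT. Qed.

Lemma proj_NW w : NW w -> proj w = w.
Proof.
elim: w => [|l w IH] //= /Sw_consE [hl hw].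
by rewrite /pN asboolT // IH.
Qed.

Lemma NW_proj w : NW (proj w).
Proof. by move=> l; rewrite mem_filter => /andP [/asboolP h _]. Qed.

Lemma proj_te wb u v : tens_eq N wb u v -> tens_eq N wb (proj u) (proj v).
Proof.
have pT : forall x g b, N x -> proj [:: (b, x, g)] = [:: (b, x, g)].
  by move=> x g b Nx; rewrite /proj /= /pN /= asboolT.
elim=> {u v}.
- by move=> w; apply: te_refl.
- by move=> w1 w2 _ h; apply: te_sym.
- by move=> w1 w2 w3 _ h1 _ h2; apply: te_trans h1 h2.
- by move=> u u' v v' _ h1 _ h2; rewrite !proj_cat; apply: te_cat.
- move=> l; rewrite /proj /=; have -> : pN (flip l) = pN l by [].
  by case: (pN l); [apply: te_cancel|apply: te_refl].
- move=> x x' g Nx Nx'.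
  have -> : proj [:: sym (x * x') g] = [:: sym (x * x') g] by apply: pT; apply: NM.
  have -> : proj [:: sym (lconj x x') (lconj x g); sym x g] =
            [:: sym (lconj x x') (lconj x g); sym x g].
    by rewrite -cat1s proj_cat !pT //; apply: NJ.
  by apply: te_rel1.
- move=> x g g' Nx.
  have -> : proj [:: sym x (g * g')] = [:: sym x (g * g')] by apply: pT.
  have -> : proj [:: sym x g; sym (lconj g x) (lconj g g')] =
            [:: sym x g; sym (lconj g x) (lconj g g')].
    by rewrite -cat1s proj_cat !pT //; apply: NJ.
  by apply: te_rel2.
- move=> x hw Nx; rewrite pT //; exact: te_wedge.
Qed.

End Words.

Section RelS.
Variables (G : groupType) (N : G -> Prop).
Hypothesis nN : is_normal_subgroup N.
Variable S : G -> G -> Prop.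
Hypothesis SB : forall s p, Sw S s -> NW N p ->
  exists s', Sw S s' /\ tens_eq N false (s ++ p) (p ++ s').

Local Notation te := (tens_eq N false).

Definition RelS (u v : word G) :=
  exists s, Sw S s /\ te (proj N u) (proj N v ++ s).

Lemma RelS_refl u : RelS u u.
Proof. by exists [::]; split; [apply: Sw_nil|rewrite cats0; apply: te_refl]. Qed.

Lemma RelS_sym u v : RelS u v -> RelS v u.
Proof.
move=> [s [Ss h]]; exists (winv s); split; first exact: Sw_winv.
apply: te_sym; apply: te_trans (te_catr _ h) _.
rewrite -catA; apply: te_trans (te_catl _ (te_winv _ _ _)) _.
by rewrite cats0; apply: te_refl.
Qed.

Lemma RelS_trans u v w : RelS u v -> RelS v w -> RelS u w.
Proof.
move=> [s1 [S1 h1]] [s2 [S2 h2]]; exists (s2 ++ s1); split; first exact: Sw_cat.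
by rewrite catA; apply: te_trans h1 (te_catr _ h2).
Qed.

Lemma RelS_cat u u' v v' : RelS u u' -> RelS v v' -> RelS (u ++ v) (u' ++ v').
Proof.
move=> [s1 [S1 h1]] [s2 [S2 h2]].
have [s1' [S1' h3]] := SB S1 (NW_proj (N:=N) (w:=v')).
exists (s1' ++ s2); split; first exact: Sw_cat.
rewrite !proj_cat.
apply: te_trans (te_cat h1 h2) _.
rewrite -catA (catA s1) -!catA.
apply: te_catl; rewrite !catA; apply: te_catr.
exact: h3.
Qed.

Lemma RelS_eq u v : proj N u = proj N v -> RelS u v.
Proof. by move=> e; exists [::]; split; [apply: Sw_nil|rewrite cats0 e; apply: te_refl]. Qed.

Lemma RelS_assoc u v w : RelS (u ++ (v ++ w)) ((u ++ v) ++ w).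
Proof. by apply: RelS_eq; rewrite catA. Qed.
Lemma RelS_idl u : RelS ([::] ++ u) u.
Proof. exact: RelS_refl. Qed.
Lemma RelS_idr u : RelS (u ++ [::]) u.
Proof. by rewrite cats0; apply: RelS_refl. Qed.
Lemma RelS_invl u : RelS (winv u ++ u) [::].
Proof.
exists [::]; split; first exact: Sw_nil.
by rewrite proj_cat proj_winv; apply: te_winvl.
Qed.
Lemma RelS_invr u : RelS (u ++ winv u) [::].
Proof.
exists [::]; split; first exact: Sw_nil.
by rewrite proj_cat proj_winv; apply: te_winv.
Qed.

Definition congS : cong (@cat (letter G)) [::] (@winv G) :=
  Cong RelS_refl RelS_sym RelS_trans RelS_cat RelS_assoc RelS_idl RelS_idr
    RelS_invl RelS_invr.

Definition HS := Q congS.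
Definition piS (w : word G) : HS := pi congS w.
Definition tS (x g : G) : HS := piS [:: sym x g].

Lemma piS_cat u v : piS (u ++ v) = piS u * piS v.
Proof. by rewrite /piS -qmulE. Qed.

Lemma piS_winv u : piS (winv u) = (piS u)^-1.
Proof. by rewrite /piS -qinvE. Qed.

Lemma piS_nil : piS [::] = 1.
Proof. by []. Qed.

Lemma piS_te u v : te u v -> piS u = piS v.
Proof.
move=> h; apply/pi_eq; exists [::]; split; first exact: Sw_nil.
by rewrite cats0; apply: proj_te.
Qed.

Lemma piS_flip x g : piS [:: flip (sym x g)] = (tS x g)^-1.
Proof. by rewrite -piS_winv. Qed.

Lemma R1S x x' g : N x -> N x' ->
  tS (x * x') g = tS (lconj x x') (lconj x g) * tS x g.
Proof. by move=> Nx Nx'; rewrite /tS -piS_cat; apply: piS_te; apply: te_rel1. Qed.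

Lemma R2S x g g' : N x -> tS x (g * g') = tS x g * tS (lconj g x) (lconj g g').
Proof. by move=> Nx; rewrite /tS -piS_cat; apply: piS_te; apply: te_rel2. Qed.

Lemma killS x g : N x -> S x g -> tS x g = 1.
Proof.
move=> Nx Sxg; apply/pi_eq; exists [:: sym x g]; split.
  by move=> l; rewrite inE => /eqP ->.
by rewrite /proj /= /pN /= asboolT //; apply: te_refl.
Qed.

Lemma piS_one u : NW N u -> piS u = 1 -> exists s, Sw S s /\ te u s.
Proof.
move=> Nu /pi_eq [s [Ss h]]; exists s; split=> //.
by rewrite proj_NW // in h.
Qed.

End RelS.

Section Conj.
Variables (G : groupType) (N : G -> Prop).
Hypothesis nN : is_normal_subgroup N.
Local Notation te := (tens_eq N false).

Definition S0 (x g : G) := False.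

Lemma SB0 : forall s p, Sw S0 s -> NW N p ->
  exists s', Sw S0 s' /\ te (s ++ p) (p ++ s').
Proof.
move=> [|l s] p Ss Np; last by case: (Ss l (mem_head _ _)).
by exists [::]; split; [apply: Sw_nil|rewrite cats0; apply: te_refl].
Qed.

Local Notation P := (piS SB0).
Local Notation t0 := (tS SB0).
Let R1' := R1S nN SB0.
Let R2' := R2S nN SB0.

Lemma P_te_iff u v : NW N u -> NW N v -> P u = P v -> te u v.
Proof.
move=> Nu Nv /pi_eq [s [Ss h]].
case: s Ss h => [|l s] Ss; last by case: (Ss l (mem_head _ _)).
by rewrite cats0 !proj_NW.
Qed.

Definition actw (k : G) (s : word G) : word G :=
  map (fun l => (l.1.1, lconj k l.1.2, lconj k l.2)) s.

Lemma actwM a b s : actw (a * b) s = actw a (actw b s).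
Proof. by rewrite /actw -map_comp; apply: eq_map => l /=; rewrite !lconjM. Qed.

Lemma actw1 s : actw 1 s = s.
Proof. by rewrite /actw -[RHS]map_id; apply: eq_map => [[[b x] g]] /=; rewrite !lconj1g. Qed.

Lemma NW_actw k s : NW N s -> NW N (actw k s).
Proof. by move=> h l /mapP [l' /h hl' ->] /=; apply: NJ. Qed.

Lemma Sw_actw (S : G -> G -> Prop) k s :
  (forall k x g, S x g -> S (lconj k x) (lconj k g)) -> Sw S s -> Sw S (actw k s).
Proof. by move=> SJ h l /mapP [l' /h hl' ->] /=; apply: SJ. Qed.

Lemma P_cons l s : P (l :: s) = P [:: l] * P s.
Proof. by rewrite -piS_cat. Qed.

Lemma P_letter b x g : P [:: (b, x, g)] = if b then (t0 x g)^-1 else t0 x g.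
Proof. by case: b => //; rewrite -piS_flip. Qed.

Definition cj (X U : HS SB0) := X * U * X^-1.
Lemma cjM X U V : cj X (U * V) = cj X U * cj X V.
Proof. by rewrite /cj !mulgA mulgVK. Qed.
Lemma cjV X U : cj X U^-1 = (cj X U)^-1.
Proof. by rewrite /cj !invgM invgK !mulgA. Qed.
Lemma cjMl X Y U : cj (X * Y) U = cj X (cj Y U).
Proof. by rewrite /cj invgM !mulgA. Qed.

Lemma cj_t x g y h : N x -> N y ->
  cj (t0 x g) (t0 y h) = t0 (lconj (lcomm x g) y) (lconj (lcomm x g) h).
Proof. by move=> Nx Ny; rewrite /cj (L3 nN R1' R2') // mulgK. Qed.

Lemma cj_tV x g y h : N x -> N y ->
  cj (t0 x g)^-1 (t0 y h) = t0 (lconj (lcomm x g)^-1 y) (lconj (lcomm x g)^-1 h).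
Proof.
move=> Nx Ny; rewrite /cj invgK.
have E := L3 nN R1' R2' g (lconj (lcomm x g)^-1 h) Nx (NJ nN (lcomm x g)^-1 Ny).
rewrite !lconjKV in E.
by rewrite -mulgA -E mulKg.
Qed.

Lemma cj_letter l s : N l.1.2 -> NW N s ->
  cj (P [:: l]) (P s) = P (actw (comm_eval [:: l]) s).
Proof.
case: l => [[b x] g] /= Nx; elim: s => [|m s IH] Ns.
  by rewrite /cj mulg1 mulgV.
have [Nm Ns'] := Sw_consE Ns.
rewrite (P_cons m s) cjM IH // /actw map_cons [in RHS]P_cons; congr (_ * _).
case: m Nm {Ns IH} => [[b' y] h] /= Ny.
rewrite !P_letter mulg1; case: b; case: b' => /=;
  rewrite ?cjV ?cj_t ?cj_tV //.
Qed.

Lemma cj_word p s : NW N p -> NW N s ->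
  cj (P p) (P s) = P (actw (comm_eval p) s).
Proof.
elim: p s => [|l p IH] s Np Ns.
  by rewrite /cj mul1g invg1 mulg1 /= actw1.
have [Nl Np'] := Sw_consE Np.
rewrite P_cons cjMl IH // cj_letter //; last exact: NW_actw.
rewrite -actwM /=; congr (P (actw _ _)).
by rewrite mulg1.
Qed.

Lemma SB_of (S : G -> G -> Prop) :
  (forall x g, S x g -> N x) ->
  (forall k x g, S x g -> S (lconj k x) (lconj k g)) ->
  forall s p, Sw S s -> NW N p -> exists s', Sw S s' /\ te (s ++ p) (p ++ s').
Proof.
move=> SN SJ s p Ss Np.
have Ns : NW N s by move=> l /Ss /SN.
exists (actw (comm_eval p)^-1 s); split; first exact: Sw_actw.
apply: P_te_iff.
- exact: Sw_cat.
- by apply: Sw_cat => //; apply: NW_actw.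
rewrite !piS_cat.
have := cj_word Np (NW_actw (k:=(comm_eval p)^-1) Ns).
rewrite -actwM mulgV actw1 /cj => <-.
by rewrite mulgVK.
Qed.

Lemma P_one_te s : NW N s -> P s = 1 -> te s [::].
Proof. by move=> Ns e; apply: P_te_iff => //; exact: Sw_nil. Qed.

End Conj.

Section Derived.
Variables (G : groupType) (N : G -> Prop).
Hypothesis nN : is_normal_subgroup N.

Lemma lconj_lcomm (k a b : G) : lconj k (lcomm a b) = lcomm (lconj k a) (lconj k b).
Proof. by rewrite /lcomm !lconj_mul !lconjV. Qed.

Lemma comm_normal (Hs : G -> Prop) : is_normal_subgroup Hs ->
  is_normal_subgroup (comm_subgroup Hs).
Proof.
move=> nH; split.
- exact: gs_one.
- by move=> x y hx hy; apply: gs_mul.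
- by move=> x hx; apply: gs_inv.
move=> g x; elim=> {x}.
- by rewrite lconjg1; apply: gs_one.
- move=> z [a [b [Ha Hb ->]]]; rewrite lconj_lcomm; apply: gs_in.
  by exists (lconj g a), (lconj g b); split=> //; apply: NJ.
- by move=> x y _ hx _ hy; rewrite lconj_mul; apply: gs_mul.
- by move=> x _ hx; rewrite lconjV; apply: gs_inv.
Qed.

Lemma comm_sub (Hs : G -> Prop) : is_normal_subgroup Hs ->
  forall x, comm_subgroup Hs x -> Hs x.
Proof.
move=> nH x; elim=> {x}.
- exact: N1 nH.
- move=> z [a [b [Ha Hb ->]]]; rewrite /lcomm.
  have h1 := NM nH Ha Hb; have h2 := NM nH h1 (NV nH Ha).
  by have h3 := NM nH h2 (NV nH Hb).
- by move=> x y _ hx _ hy; apply: NM.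
- by move=> x _ hx; apply: NV.
Qed.

Lemma derived_normal k : is_normal_subgroup (derived N k).
Proof. by elim: k => [|k IH] //=; apply: comm_normal. Qed.

Lemma derived_sub k x : derived N k x -> N x.
Proof.
elim: k x => [|k IH] x //= h; apply: IH.
exact: comm_sub (derived_normal k) _ h.
Qed.

Lemma derived_comm k a b : derived N k a -> derived N k b -> derived N k.+1 (lcomm a b).
Proof. by move=> ha hb; apply: gs_in; exists a, b. Qed.

End Derived.

Section Main.
Variables (G : groupType) (N : G -> Prop).
Hypothesis nN : is_normal_subgroup N.
Variable e : nat.
Hypothesis expN : forall x, N x -> x ^+ e = 1.
Local Notation te := (tens_eq N false).
Definition cc := if odd e then e else (e * 2)%N.

Definition Lk k (x g : G) := N x /\ (derived N k x \/ derived N k g).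

Lemma word_pow_S (w : word G) n : word_pow w n.+1 = w ++ word_pow w n.
Proof. by []. Qed.

Lemma word_powD (w : word G) m n : word_pow w (m + n) = word_pow w m ++ word_pow w n.
Proof. by elim: m => [|m IH] //=; rewrite addSn !word_pow_S IH catA. Qed.

Lemma word_powM (w : word G) m n : word_pow w (m * n) = word_pow (word_pow w m) n.
Proof. by elim: n => [|n IH]; rewrite ?muln0 // mulnS word_powD IH. Qed.

Lemma te_pow (u v : word G) n : te u v -> te (word_pow u n) (word_pow v n).
Proof.
move=> h; elim: n => [|n IH]; first exact: te_refl.
by rewrite !word_pow_S; apply: te_cat.
Qed.

Lemma Sw_pow (S : G -> G -> Prop) (w : word G) n : Sw S w -> Sw S (word_pow w n).
Proof.
move=> h; elim: n => [|n IH]; first exact: Sw_nil.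
by rewrite word_pow_S; apply: Sw_cat.
Qed.

Lemma step k w : Sw (Lk k) w ->
  exists s, Sw (Lk k.+1) s /\ te (word_pow w cc) s.
Proof.
move=> Lw.
set S := Lk k.+1.
have SN : forall x g, S x g -> N x by move=> x g [].
have SJ : forall k' x g, S x g -> S (lconj k' x) (lconj k' g).
  move=> k' x g [Nx hx]; split; first by have := NJ nN k' Nx.
  have nD := derived_normal nN k.+1.
  by case: hx => h; [left|right]; have := NJ nD k' h.
have SB := SB_of nN SN SJ.
set A := derived N k; set B := derived N k.+1.
have nA : is_normal_subgroup A by apply: derived_normal.
have nB : is_normal_subgroup B by apply: derived_normal.
have AN : forall x, A x -> N x by move=> x; apply: derived_sub.
have BN : forall x, B x -> N x by move=> x; apply: derived_sub.
have AAB : forall a b, A a -> A b -> B (lcomm a b) by move=> a b; apply: derived_comm.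
have kill : forall x g, N x -> B x \/ B g -> tS SB x g = 1.
  by move=> x g Nx h; apply: (killS SB Nx); rewrite /S /Lk; split.
have expA : forall a, A a -> a ^+ e = 1 by move=> a /AN; apply: expN.
have KE := K_exp nN (R1S nN SB) (R2S nN SB) nA AN BN AAB kill expA (erefl cc).
have NWw : NW N w by move=> l /Lw [].
have gw : gen (Kgen N (tS SB) A) (piS SB w).
  elim: w Lw {NWw} => [|[[b x] g] w IH] Lw; first exact: gen1.
  move: (Sw_consE Lw) => /= [[Nx hx] Lw'].
  rewrite -cat1s piS_cat.
  case: b {Lw}.
    rewrite -[(true, x, g)]/(flip (sym x g)) piS_flip.
    by apply: genV; [exists x, g|apply: IH].
  by apply: genM; [exists x, g|apply: IH].
have := KE _ gw.
have pw : forall n, piS SB w ^+ n = piS SB (word_pow w n).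
  by elim=> [|n IH] //; rewrite word_pow_S piS_cat -IH expgS.
rewrite pw.
by move/piS_one; apply; apply: Sw_pow.
Qed.

Lemma iterk k w : NW N w -> exists s, Sw (Lk k) s /\ te (word_pow w (cc ^ k)) s.
Proof.
move=> Nw; elim: k => [|k [s [Ls h]]].
  exists w; split; first by move=> l /Nw h; split=> //; left.
  by rewrite expn0 word_pow_S cats0; apply: te_refl.
have [s' [Ls' h']] := step Ls.
exists s'; split=> //.
rewrite expnSr word_powM.
exact: te_trans (te_pow _ h) h'.
Qed.

Lemma final d w : (forall x, derived N d x -> x = 1) -> NW N w ->
  te (word_pow w (cc ^ d)) [::].
Proof.
move=> triv Nw.
have [s [Ls h]] := iterk d Nw.
apply: te_trans h _.
have Ns : NW N s by move=> l /Ls [].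
apply: (P_one_te Ns).
elim: s Ls {Ns} => [|[[b x] g] s IH] Ls; first by [].
move: (Sw_consE Ls) => /= [[Nx hx] Ls'].
rewrite -cat1s piS_cat IH // mulg1.
have t1 : tS (SB0 (N:=N)) x g = 1.
  case: hx => /triv ->; first exact: t1g nN (R1S nN (SB0 (N:=N))) g.
  by have := tx1 (R2S nN (SB0 (N:=N))) Nx.
case: b {Ls}; last exact: t1.
by rewrite -[(true, x, g)]/(flip (sym x g)) piS_flip t1 invg1.
Qed.

End Main.

Lemma te_ft (G : groupType) (N : G -> Prop) u v :
  tens_eq N false u v -> tens_eq N true u v.
Proof.
elim=> {u v}.
- by move=> w; apply: te_refl.
- by move=> w1 w2 _ h; apply: te_sym.
- by move=> w1 w2 w3 _ h1 _ h2; apply: te_trans h1 h2.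
- by move=> u u' v v' _ h1 _ h2; apply: te_cat.
- by move=> l; apply: te_cancel.
- by move=> x x' g Nx Nx'; apply: te_rel1.
- by move=> x g g' Nx; apply: te_rel2.
- by [].
Qed.

Theorem lemma6p4 (G : groupType) (N : G -> Prop) (d e : nat) :
  is_normal_subgroup N -> derived_length N d -> exponent_is N e ->
  (odd e ->
     tensor_exp_dvd N (e ^ d) /\ rel_schur_exp_dvd N (e ^ d)) /\
  (~~ odd e ->
     tensor_exp_dvd N (2 ^ d * e ^ d) /\ rel_schur_exp_dvd N (2 ^ d * e ^ d)).
Proof.
move=> nN [triv _] [_ expN _].
have key : tensor_exp_dvd N (cc e ^ d).
  by move=> w Nw; apply: final.
have key2 : rel_schur_exp_dvd N (cc e ^ d).
  by move=> w Nw _; apply: te_ft; apply: key.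
split=> oe.
  by move: key key2; rewrite /cc oe.
by move: key key2; rewrite /cc (negbTE oe) expnMn mulnC.
Qed.
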